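(* Let $\theta\in\mathbb{R}\setminus2\pi\mathbb{Z}$, $a\in\mathbb{C}\setminus\{0\}$, and let $G\subset\mathcal{H}(1,\mathbb{C})$ be the group generated by $h:z\mapsto e^{i\theta}z$ and $f=(a,e^{i\theta}):z\mapsto e^{i\theta}(z-a)+a$. Then exactly one of the following holds: (i) every orbit of $G$ is dense in $\mathbb{C}$; this is the case if and only if $\theta\notin H_2\cup H_3$ (equivalently $f\notin\mathcal{SR}_1$); (ii) every orbit of $G$ is closed and discrete in $\mathbb{C}$; this is the case if and only if $\theta\in H_2\cup H_3$ (equivalently $f\in\mathcal{SR}_1$).
   Context: $\mathcal{H}(1,\mathbb{C})$ is the group of maps $z\mapsto\lambda z+b$ of $\mathbb{C}$, $\lambda\in\mathbb{C}^*$, $b\in\mathbb{C}$. $H_2=(\frac{\pi}{2}+\pi\mathbb{Z})\cup\pi\mathbb{Z}$, $F_2=\{e^{ix}:x\in H_2\}$, $H_3=(\frac{\pi}{3}+\pi\mathbb{Z})\cup(-\frac{\pi}{3}+\pi\mathbb{Z})\cup\pi\mathbb{Z}$, $F_3=\{e^{ix}:x\in H_3\}$, $\mathcal{SR}_1=\{z\mapsto\lambda z+b:\ \lambda\in F_2\cup F_3,\ b\in\mathbb{C}\}$. Orbits: $G(z)=\{g(z):g\in G\}$. *)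

(* Defs.v *)
From Stdlib Require Import Reals ZArith.
Open Scope R_scope.

(** Complex numbers as R * R (real part, imaginary part). *)
Definition Cplx : Type := (R * R)%type.
Definition C0 : Cplx := (0, 0).
Definition C1 : Cplx := (1, 0).
Definition Cadd (z w : Cplx) : Cplx := (fst z + fst w, snd z + snd w).
Definition Copp (z : Cplx) : Cplx := (- fst z, - snd z).
Definition Cmul (z w : Cplx) : Cplx :=
  (fst z * fst w - snd z * snd w, fst z * snd w + snd z * fst w).
Definition Cinv (z : Cplx) : Cplx :=
  let n := fst z * fst z + snd z * snd z in (fst z / n, - snd z / n).
Definition Cnorm (z : Cplx) : R := sqrt (fst z * fst z + snd z * snd z).
Definition Cdist (z w : Cplx) : R := Cnorm (Cadd z (Copp w)).
Definition Cexpi (x : R) : Cplx := (cos x, sin x).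

(** Elements of H(1,Cplx): pairs (lambda, b) with lambda <> 0, acting by z |-> lambda z + b. *)
Definition aff : Type := (Cplx * Cplx)%type.
Definition aff_apply (g : aff) (z : Cplx) : Cplx := Cadd (Cmul (fst g) z) (snd g).
Definition aff_id : aff := (C1, C0).
(** composition g o k : z |-> g (k z) *)
Definition aff_comp (g k : aff) : aff :=
  (Cmul (fst g) (fst k), Cadd (Cmul (fst g) (snd k)) (snd g)).
Definition aff_inv (g : aff) : aff :=
  (Cinv (fst g), Copp (Cmul (Cinv (fst g)) (snd g))).
Definition in_H1C (g : aff) : Prop := fst g <> C0.

Inductive gen_group (S : aff -> Prop) : aff -> Prop :=
| gg_id : gen_group S aff_id
| gg_gen : forall g, S g -> gen_group S g
| gg_inv : forall g, gen_group S g -> gen_group S (aff_inv g)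
| gg_comp : forall g k, gen_group S g -> gen_group S k -> gen_group S (aff_comp g k).

Definition Corbit (G : aff -> Prop) (z : Cplx) : Cplx -> Prop :=
  fun w => exists g, G g /\ w = aff_apply g z.

Definition Cdense (A : Cplx -> Prop) : Prop :=
  forall w eps, 0 < eps -> exists u, A u /\ Cdist u w < eps.
Definition Cclosed (A : Cplx -> Prop) : Prop :=
  forall w, (forall eps, 0 < eps -> exists u, A u /\ Cdist u w < eps) -> A w.
Definition Cdiscrete (A : Cplx -> Prop) : Prop :=
  forall w, A w -> exists eps, 0 < eps /\ forall u, A u -> Cdist u w < eps -> u = w.

Definition H2 (x : R) : Prop :=
  exists k : Z, x = PI / 2 + IZR k * PI \/ x = IZR k * PI.
Definition H3 (x : R) : Prop :=
  exists k : Z, x = PI / 3 + IZR k * PI \/ x = - (PI / 3) + IZR k * PI \/ x = IZR k * PI.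
Definition F2 (l : Cplx) : Prop := exists x, H2 x /\ l = Cexpi x.
Definition F3 (l : Cplx) : Prop := exists x, H3 x /\ l = Cexpi x.
Definition SR1 (g : aff) : Prop := F2 (fst g) \/ F3 (fst g).

(** h : z |-> e^{i theta} z ;  f = (a, e^{i theta}) : z |-> e^{i theta}(z - a) + a *)
Definition rot_h (theta : R) : aff := (Cexpi theta, C0).
Definition rot_f (a : Cplx) (theta : R) : aff :=
  (Cexpi theta, Cmul (Cadd C1 (Copp (Cexpi theta))) a).
Definition G_hf (a : Cplx) (theta : R) : aff -> Prop :=
  gen_group (fun g => g = rot_h theta \/ g = rot_f a theta).

(* Main.v *)
Require Import Defs.
From Stdlib Require Import Reals ZArith Lra Lia Psatz Classical.
Import Defs.
Open Scope R_scope.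

Lemma cos_eq_cos t x : cos t = cos x ->
  exists k : Z, t = x + 2 * IZR k * PI \/ t = - x + 2 * IZR k * PI.
Proof.
  intro H. assert (H0 : cos t - cos x = 0) by lra.
  rewrite form2 in H0.
  assert (H1: sin ((t - x) / 2) = 0 \/ sin ((t + x) / 2) = 0).
  { destruct (Req_dec (sin ((t - x) / 2)) 0); [left; auto|right].
    destruct (Req_dec (sin ((t + x) / 2)) 0); auto. exfalso.
    assert (-2 * sin ((t - x) / 2) * sin ((t + x) / 2) <> 0).
    { repeat apply Rmult_integral_contrapositive; auto; lra. } auto. }
  destruct H1 as [H1|H1]; apply sin_eq_0_0 in H1; destruct H1 as [k Hk];
    exists k; [left|right]; lra.
Qed.

Lemma cos_kPI x k : cos (x + IZR k * PI) = cos x \/ cos (x + IZR k * PI) = - cos x.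
Proof.
  rewrite cos_plus.
  assert (Hs : sin (IZR k * PI) = 0) by (apply sin_eq_0_1; eauto).
  pose proof (sin2_cos2 (IZR k * PI)) as Hc. rewrite Hs in Hc. unfold Rsqr in Hc.
  assert (cos (IZR k * PI) = 1 \/ cos (IZR k * PI) = -1) as [E|E] by nra;
  rewrite E, Hs; [left|right]; ring.
Qed.

Lemma cos_int_pi k : cos (IZR k * PI) = 1 \/ cos (IZR k * PI) = -1.
Proof.
  pose proof (cos_kPI 0 k) as H. rewrite Rplus_0_l, cos_0 in H. exact H.
Qed.

Lemma K1_fwd x : H2 x \/ H3 x -> exists n : Z, 2 * cos x = IZR n.
Proof.
  assert (HP3 : cos (PI/3) = 1/2) by apply cos_PI3.
  assert (HP3' : cos (-(PI/3)) = 1/2) by (rewrite cos_neg; apply cos_PI3).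
  assert (HP2 : cos (PI/2) = 0) by apply cos_PI2.
  intros [[k [E|E]]|[k [E|[E|E]]]]; subst x.
  - destruct (cos_kPI (PI/2) k) as [E|E]; rewrite E, HP2; exists 0%Z; simpl; lra.
  - destruct (cos_int_pi k) as [E|E]; rewrite E; [exists 2%Z|exists (-2)%Z]; simpl; lra.
  - destruct (cos_kPI (PI/3) k) as [E|E]; rewrite E, HP3; [exists 1%Z|exists (-1)%Z]; simpl; lra.
  - destruct (cos_kPI (-(PI/3)) k) as [E|E]; rewrite E, HP3'; [exists 1%Z|exists (-1)%Z]; simpl; lra.
  - destruct (cos_int_pi k) as [E|E]; rewrite E; [exists 2%Z|exists (-2)%Z]; simpl; lra.
Qed.

Lemma K1_bwd t : (forall k : Z, t <> 2 * PI * IZR k) ->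
  forall n : Z, 2 * cos t = IZR n -> H2 t \/ H3 t.
Proof.
  intros ht n Hn. pose proof (COS_bound t) as [B1 B2].
  assert (Hn1 : (-2 <= n <= 2)%Z) by (split; apply le_IZR; simpl; lra).
  assert (n = -2 \/ n = -1 \/ n = 0 \/ n = 1 \/ n = 2)%Z as Hc by lia.
  destruct Hc as [ E0 | [ E0 | [ E0 | [ E0 | E0 ] ] ] ]; subst n; simpl in Hn.
  - assert (cos t = cos PI) by (rewrite cos_PI; lra).
    destruct (cos_eq_cos _ _ H) as [k [E|E]]; left.
    + exists (2*k+1)%Z. right. rewrite E, plus_IZR, mult_IZR. simpl. lra.
    + exists (2*k-1)%Z. right. rewrite E, minus_IZR, mult_IZR. simpl. lra.
  - assert (cos t = cos (2*(PI/3))) by (rewrite cos_2PI3; lra).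
    destruct (cos_eq_cos _ _ H) as [k [E|E]]; right.
    + exists (2*k+1)%Z. right; left. rewrite E, plus_IZR, mult_IZR. simpl. lra.
    + exists (2*k-1)%Z. left. rewrite E, minus_IZR, mult_IZR. simpl. lra.
  - assert (cos t = 0) by lra. apply cos_eq_0_0 in H. destruct H as [k E].
    left. exists k. left. lra.
  - assert (cos t = cos (PI/3)) by (rewrite cos_PI3; lra).
    destruct (cos_eq_cos _ _ H) as [k [E|E]]; right.
    + exists (2*k)%Z. left. rewrite E, mult_IZR. simpl. lra.
    + exists (2*k)%Z. right; left. rewrite E, mult_IZR. simpl. lra.
  - assert (cos t = cos 0) by (rewrite cos_0; lra).
    destruct (cos_eq_cos _ _ H) as [k [E|E]]; exfalso; apply (ht k); lra.
Qed.
Lemma floor_ex x : exists m : Z, IZR m <= x < IZR m + 1.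
Proof.
  destruct (archimed x) as [H1 H2]. exists (up x - 1)%Z. rewrite minus_IZR. simpl. lra.
Qed.

Lemma grid_approx co si t1 t2 d1 d2 : co*co+si*si = 1 -> si <> 0 -> 0 < t1*t1+t2*t2 ->
  exists m n : Z,
    (IZR m*t1 + IZR n*(co*t1 - si*t2) - d1) * (IZR m*t1 + IZR n*(co*t1 - si*t2) - d1)
  + (IZR m*t2 + IZR n*(co*t2 + si*t1) - d2) * (IZR m*t2 + IZR n*(co*t2 + si*t1) - d2)
  < 4 * (t1*t1+t2*t2).
Proof.
  intros Hcs Hsi Ht.
  set (T := t1*t1+t2*t2).
  assert (HD : si * T <> 0) by (apply Rmult_integral_contrapositive; split; [exact Hsi| apply Rgt_not_eq; exact Ht]).
  set (x := (d1 * (co*t2 + si*t1) - d2 * (co*t1 - si*t2)) / (si * T)).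
  set (y := (t1 * d2 - t2 * d1) / (si * T)).
  assert (E1 : x * t1 + y * (co*t1 - si*t2) = d1).
  { unfold x, y, T. field. unfold T in Ht. split; [apply Rgt_not_eq; exact Ht|exact Hsi]. }
  assert (E2 : x * t2 + y * (co*t2 + si*t1) = d2).
  { unfold x, y, T. field. unfold T in Ht. split; [apply Rgt_not_eq; exact Ht|exact Hsi]. }
  destruct (floor_ex x) as [m Hm]. destruct (floor_ex y) as [n Hn].
  exists m, n.
  set (A := IZR m - x). set (B := IZR n - y).
  assert (Hid : (IZR m*t1 + IZR n*(co*t1 - si*t2) - d1) * (IZR m*t1 + IZR n*(co*t1 - si*t2) - d1)
  + (IZR m*t2 + IZR n*(co*t2 + si*t1) - d2) * (IZR m*t2 + IZR n*(co*t2 + si*t1) - d2)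
   = (A*A + 2*A*B*co + B*B*(co*co+si*si)) * T).
  { rewrite <- E1, <- E2. unfold A, B, T. ring. }
  rewrite Hid, Hcs. apply Rmult_lt_compat_r; [exact Ht|].
  assert (Hc : -1 <= co <= 1) by nra.
  assert (-1 < A <= 0) by (unfold A; lra). assert (-1 < B <= 0) by (unfold B; lra).
  assert (HAB : 0 <= A * B) by nra.
  assert (HAB2 : A * B * co <= A * B) by nra.
  assert (HS : (A + B) * (A + B) < 4) by nra.
  nra.

Qed.
Definition Cscal (r : R) (z : Cplx) : Cplx := (r * fst z, r * snd z).
Definition n2 (z : Cplx) : R := fst z * fst z + snd z * snd z.

Lemma pair_eq {A B : Type} (x y : A * B) : fst x = fst y -> snd x = snd y -> x = y.
Proof. destruct x, y; simpl; intros; subst; auto. Qed.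

Lemma Cnorm_lt (x : Cplx) e : 0 < e -> n2 x < e * e -> Cnorm x < e.
Proof.
  intros He H. unfold Cnorm. rewrite <- (sqrt_square e) by lra.
  apply sqrt_lt_1_alt. unfold n2 in H. split; [nra|exact H].
Qed.

Lemma Cinv_expi x : Cinv (Cexpi x) = (cos x, - sin x).
Proof.
  pose proof (sin2_cos2 x) as H. unfold Rsqr in H.
  unfold Cinv, Cexpi; simpl. apply pair_eq; simpl;
  replace (cos x * cos x + sin x * sin x) with 1 by lra; field.
Qed.

Section Dense.
Variables (theta : R) (a : Cplx).
Let GG := G_hf a theta.
Let co := cos theta.
Let si := sin theta.
Let lam := Cexpi theta.
Definition TR (v : Cplx) := GG (C1, v).

Lemma cs1 : co * co + si * si = 1.
Proof. pose proof (sin2_cos2 theta) as H. unfold Rsqr in H. unfold co, si. lra. Qed.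

Lemma GG_h : GG (rot_h theta).
Proof. apply gg_gen. auto. Qed.
Lemma GG_f : GG (rot_f a theta).
Proof. apply gg_gen. auto. Qed.

Lemma TR_add v w : TR v -> TR w -> TR (Cadd v w).
Proof.
  unfold TR; intros H1 H2.
  replace (C1, Cadd v w) with (aff_comp (C1, v) (C1, w)).
  - apply gg_comp; auto.
  - unfold aff_comp, C1, Cmul, Cadd; simpl. apply pair_eq; simpl; apply pair_eq; simpl; ring.
Qed.

Lemma TR_opp v : TR v -> TR (Copp v).
Proof.
  unfold TR; intros H1.
  replace (C1, Copp v) with (aff_inv (C1, v)).
  - apply gg_inv; auto.
  - unfold aff_inv, C1, Cinv, Cmul, Copp; simpl. apply pair_eq; simpl; apply pair_eq; simpl; field.
Qed.

Lemma TR_0 : TR C0.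
Proof. apply gg_id. Qed.

Lemma TR_rot v : TR v -> TR (Cmul lam v).
Proof.
  unfold TR; intros H1.
  replace (C1, Cmul lam v) with (aff_comp (rot_h theta) (aff_comp (C1, v) (aff_inv (rot_h theta)))).
  - apply gg_comp; [apply GG_h|]. apply gg_comp; auto. apply gg_inv, GG_h.
  - pose proof cs1. unfold aff_comp, aff_inv, rot_h. simpl. rewrite Cinv_expi.
    unfold lam, Cexpi, C1, C0, Cmul, Cadd, Copp; simpl. fold co si.
    apply pair_eq; simpl; apply pair_eq; simpl; nra.
Qed.

Lemma TR_roti v : TR v -> TR (Cmul (Cinv lam) v).
Proof.
  unfold TR; intros H1.
  replace (C1, Cmul (Cinv lam) v) with (aff_comp (aff_inv (rot_h theta)) (aff_comp (C1, v) (rot_h theta))).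
  - apply gg_comp; [apply gg_inv, GG_h|]. apply gg_comp; auto. apply GG_h.
  - pose proof cs1. unfold aff_comp, aff_inv, rot_h, lam. simpl. rewrite Cinv_expi.
    unfold Cexpi, C1, C0, Cmul, Cadd, Copp; simpl. fold co si.
    apply pair_eq; simpl; apply pair_eq; simpl; nra.
Qed.

Definition cc := Cmul (Cinv lam) (Cmul (Cadd C1 (Copp lam)) a).

Lemma TR_c : TR cc.
Proof.
  unfold TR.
  replace (C1, cc) with (aff_comp (aff_inv (rot_h theta)) (rot_f a theta)).
  - apply gg_comp; [apply gg_inv, GG_h| apply GG_f].
  - pose proof cs1. unfold cc, aff_comp, aff_inv, rot_h, rot_f, lam. simpl. rewrite Cinv_expi.
    unfold Cexpi, C1, C0, Cmul, Cadd, Copp; simpl. fold co si.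
    apply pair_eq; simpl; apply pair_eq; simpl; nra.
Qed.

Lemma TR_s v : TR v -> TR (Cscal (2 * co) v).
Proof.
  intro H. replace (Cscal (2 * co) v) with (Cadd (Cmul lam v) (Cmul (Cinv lam) v)).
  - apply TR_add; [apply TR_rot|apply TR_roti]; auto.
  - unfold lam. rewrite Cinv_expi. unfold Cexpi, Cmul, Cadd, Cscal; simpl. fold co si.
    apply pair_eq; simpl; ring.
Qed.

Lemma TR_nat v (n : nat) : TR v -> TR (Cscal (INR n) v).
Proof.
  intro H. induction n.
  - replace (Cscal (INR 0) v) with C0 by (apply pair_eq; simpl; ring). apply TR_0.
  - replace (Cscal (INR (S n)) v) with (Cadd (Cscal (INR n) v) v).
    + apply TR_add; auto.
    + rewrite S_INR. apply pair_eq; simpl; ring.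
Qed.

Lemma TR_int v (m : Z) : TR v -> TR (Cscal (IZR m) v).
Proof.
  intro H. destruct (Z_le_gt_dec 0 m).
  - replace m with (Z.of_nat (Z.to_nat m)) by lia. rewrite <- INR_IZR_INZ. apply TR_nat; auto.
  - replace (Cscal (IZR m) v) with (Copp (Cscal (INR (Z.to_nat (- m))) v)).
    + apply TR_opp, TR_nat; auto.
    + rewrite INR_IZR_INZ. rewrite Z2Nat.id by lia. rewrite opp_IZR.
      apply pair_eq; simpl; ring.
Qed.

Lemma TR_apply v z : TR v -> Corbit GG z (Cadd z v).
Proof.
  intro H. exists (C1, v). split; auto. unfold aff_apply, C1, Cmul, Cadd; simpl.
  apply pair_eq; simpl; ring.
Qed.


Lemma n2_mul x y : n2 (Cmul x y) = n2 x * n2 y.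
Proof. unfold n2, Cmul; simpl. ring. Qed.

Lemma n2_pos x : x <> C0 -> 0 < n2 x.
Proof.
  intro H. destruct x as [x1 x2]. unfold n2; simpl.
  destruct (Req_dec x1 0); destruct (Req_dec x2 0); subst; try nra.
  exfalso; apply H; reflexivity.
Qed.

Lemma dense_main : (forall n : Z, 2 * co <> IZR n) -> a <> C0 -> forall z, Cdense (Corbit GG z).
Proof.
  intros Hn Ha z w eps Heps.
  pose proof cs1 as Hcs.
  assert (Hc1 : co <> 1) by (intro E; apply (Hn 2%Z); simpl; lra).
  assert (Hc2 : co <> -1) by (intro E; apply (Hn (-2)%Z); simpl; lra).
  assert (HB : -1 <= co <= 1) by (apply COS_bound).
  assert (Hsi : si <> 0).
  { intro E. rewrite E in Hcs. assert (co = 1 \/ co = -1) as [|] by nra; auto. }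
  destruct (archimed (2 * co)) as [Hu1 Hu2].
  set (u := up (2 * co)).
  set (r := 2 * co - IZR u + 1).
  assert (Hr0 : 0 < r).
  { unfold r. destruct (Req_dec (IZR u) (2 * co + 1)) as [E|E].
    - exfalso. apply (Hn (u - 1)%Z). rewrite minus_IZR. simpl. lra.
    - fold u in Hu1, Hu2. lra. }
  assert (Hr1 : r < 1) by (unfold r; fold u in Hu1; lra).
  assert (HTk : forall k, TR (Cscal (r ^ k) cc)).
  { induction k.
    - replace (Cscal (r ^ 0) cc) with cc by (apply pair_eq; simpl; ring). apply TR_c.
    - replace (Cscal (r ^ S k) cc) with
        (Cadd (Cadd (Cscal (2 * co) (Cscal (r ^ k) cc)) (Copp (Cscal (IZR u) (Cscal (r ^ k) cc))))
              (Cscal (r ^ k) cc)).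
      + apply TR_add; auto. apply TR_add. apply TR_s; auto. apply TR_opp, TR_int; auto.
      + unfold r. apply pair_eq; simpl; ring. }
  assert (Hcc : 0 < n2 cc).
  { unfold cc. rewrite !n2_mul. unfold lam. rewrite Cinv_expi.
    unfold n2, Cexpi, Cadd, Copp, C1; simpl. fold co si.
    assert (0 < n2 a) by (apply n2_pos; auto). unfold n2 in H.
    assert (0 < (1 - co) * (1 - co)) by (apply Rsqr_pos_lt; lra).
    replace (co * co + - si * - si) with 1 by lra.
    repeat apply Rmult_lt_0_compat; try lra; try exact H; nra. }
  set (y := Rmin 1 (eps * eps / (4 * n2 cc))).
  assert (Hy : 0 < y).
  { unfold y. apply Rmin_glb_lt; [lra|]. apply Rdiv_lt_0_compat; nra. }
  assert (Hra : Rabs r < 1) by (rewrite Rabs_pos_eq; lra).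
  destruct (pow_lt_1_zero r Hra y Hy) as [N HN].
  specialize (HN N (le_n N)).
  set (q := r ^ N). fold q in HN.
  assert (Hq : 0 < q) by (apply pow_lt; lra).
  rewrite Rabs_pos_eq in HN by lra.
  assert (Hq1 : q < 1) by (pose proof (Rmin_l 1 (eps * eps / (4 * n2 cc))); fold y in H; lra).
  assert (Hq2 : q < eps * eps / (4 * n2 cc)) by (pose proof (Rmin_r 1 (eps * eps / (4 * n2 cc))); fold y in H; lra).
  assert (Hqq : 4 * n2 cc * (q * q) < eps * eps).
  { assert (q * q < eps * eps / (4 * n2 cc)) by nra.
    apply (Rmult_lt_compat_l (4 * n2 cc)) in H; [|lra].
    replace (4 * n2 cc * (eps * eps / (4 * n2 cc))) with (eps * eps) in H by (field; lra). exact H. }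
  set (t := Cscal q cc).
  assert (Ht : 0 < fst t * fst t + snd t * snd t).
  { unfold t, Cscal; cbn [fst snd]. unfold n2 in Hcc.
    replace (q * fst cc * (q * fst cc) + q * snd cc * (q * snd cc)) with ((q*q) * (fst cc * fst cc + snd cc * snd cc)) by ring.
    apply Rmult_lt_0_compat; nra. }
  destruct (grid_approx co si (fst t) (snd t) (fst w - fst z) (snd w - snd z) Hcs Hsi Ht)
    as [m [n Hmn]].
  set (v := Cadd (Cscal (IZR m) t) (Cscal (IZR n) (Cmul lam t))).
  exists (Cadd z v). split.
  - apply TR_apply. unfold v. apply TR_add; apply TR_int; [|apply TR_rot]; apply HTk.
  - unfold Cdist. apply Cnorm_lt; auto.
    eapply Rle_lt_trans; [|apply Rlt_trans with (4 * (fst t * fst t + snd t * snd t)); [exact Hmn|]].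
    + right. unfold n2, v, lam, Cexpi, Cadd, Copp, Cscal, Cmul; simpl. fold co si. ring.
    + unfold t, Cscal; cbn [fst snd]. unfold n2 in Hqq.
      replace (q * fst cc * (q * fst cc) + q * snd cc * (q * snd cc)) with ((q*q) * (fst cc * fst cc + snd cc * snd cc)) by ring.
      lra.
Qed.

End Dense.

Definition Psep (S : Cplx -> Prop) := forall p, exists eps, 0 < eps /\
  forall u, S u -> Cdist u p < eps -> u = p.

Lemma Psep_sub (S A : Cplx -> Prop) : Psep S -> (forall u, A u -> S u) -> Psep A.
Proof.
  intros H Hs p. destruct (H p) as [e [He Hu]]. exists e; split; auto.
Qed.

Lemma Psep_cd A : Psep A -> Cclosed A /\ Cdiscrete A.
Proof.
  intro H. split.
  - intros w Hw. destruct (H w) as [e [He Hu]]. destruct (Hw e He) as [u [Au Hd]].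
    rewrite <- (Hu u Au Hd). exact Au.
  - intros w Aw. destruct (H w) as [e [He Hu]]. exists e; split; auto.
Qed.

Lemma Psep_union A B : Psep A -> Psep B -> Psep (fun u => A u \/ B u).
Proof.
  intros HA HB p. destruct (HA p) as [e1 [He1 H1]]. destruct (HB p) as [e2 [He2 H2']].
  exists (Rmin e1 e2). split; [apply Rmin_glb_lt; auto|].
  intros u [Au|Bu] Hd.
  - apply H1; auto. pose proof (Rmin_l e1 e2). lra.
  - apply H2'; auto. pose proof (Rmin_r e1 e2). lra.
Qed.

Lemma int_sep r : exists e, 0 < e /\ forall m : Z, Rabs (IZR m - r) < e -> IZR m = r.
Proof.
  destruct (floor_ex r) as [m0 [H1 H2]].
  destruct (Req_dec (IZR m0) r) as [E|E].
  - exists 1. split; [lra|]. intros m Hm. rewrite <- E in *.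
    apply Rabs_def2 in Hm. destruct Hm as [Hm1 Hm2].
    rewrite <- minus_IZR in Hm1, Hm2.
    assert (A1 : IZR (-1) < IZR (m - m0)) by lra.
    assert (A2 : IZR (m - m0) < IZR 1) by lra.
    apply lt_IZR in A1. apply lt_IZR in A2. f_equal. lia.
  - exists (Rmin (r - IZR m0) (IZR m0 + 1 - r)). split.
    + apply Rmin_glb_lt; lra.
    + intros m Hm. exfalso. apply Rabs_def2 in Hm. destruct Hm as [Hm1 Hm2].
      pose proof (Rmin_l (r - IZR m0) (IZR m0 + 1 - r)).
      pose proof (Rmin_r (r - IZR m0) (IZR m0 + 1 - r)).
      assert (A1 : IZR m0 < IZR m) by lra. assert (A2 : IZR m < IZR m0 + 1) by lra.
      rewrite <- plus_IZR in A2. apply lt_IZR in A1. apply lt_IZR in A2. lia.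
Qed.

Lemma fst_le_norm w : Rabs (fst w) <= Cnorm w.
Proof.
  unfold Cnorm. rewrite <- sqrt_Rsqr_abs. apply sqrt_le_1_alt. unfold Rsqr.
  pose proof (Rle_0_sqr (snd w)). unfold Rsqr in H. lra.
Qed.
Lemma snd_le_norm w : Rabs (snd w) <= Cnorm w.
Proof.
  unfold Cnorm. rewrite <- sqrt_Rsqr_abs. apply sqrt_le_1_alt. unfold Rsqr.
  pose proof (Rle_0_sqr (fst w)). unfold Rsqr in H. lra.
Qed.

Lemma lin_bound d1 d2 c1 c2 del : Rabs d1 <= del -> Rabs d2 <= del ->
  Rabs (d1 * c1 - d2 * c2) <= del * (Rabs c1 + Rabs c2).
Proof.
  intros H1 H2. unfold Rminus. eapply Rle_trans; [apply Rabs_triang|].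
  rewrite Rabs_Ropp, !Rabs_mult.
  pose proof (Rabs_pos c1). pose proof (Rabs_pos c2).
  pose proof (Rmult_le_compat_r _ _ _ H H1). pose proof (Rmult_le_compat_r _ _ _ H0 H2). lra.
Qed.

Definition LatP (v e1 e2 : Cplx) (u : Cplx) :=
  exists m n : Z, u = Cadd v (Cadd (Cscal (IZR m) e1) (Cscal (IZR n) e2)).

Lemma lat_single v e1 e2 : fst e1 * snd e2 - snd e1 * fst e2 <> 0 -> Psep (LatP v e1 e2).
Proof.
  intros HD p.
  set (D := fst e1 * snd e2 - snd e1 * fst e2) in *.
  set (al := ((fst p - fst v) * snd e2 - (snd p - snd v) * fst e2) / D).
  set (be := (fst e1 * (snd p - snd v) - snd e1 * (fst p - fst v)) / D).
  destruct (int_sep al) as [ea [Hea Ha]]. destruct (int_sep be) as [eb [Heb Hb]].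
  assert (HDp : 0 < Rabs D) by (apply Rabs_pos_lt; auto).
  set (K := (Rabs (fst e1) + Rabs (snd e1) + Rabs (fst e2) + Rabs (snd e2)) / Rabs D + 1).
  assert (HK : 0 < K).
  { unfold K. pose proof (Rabs_pos (fst e1)). pose proof (Rabs_pos (snd e1)).
    pose proof (Rabs_pos (fst e2)). pose proof (Rabs_pos (snd e2)).
    assert (0 <= (Rabs (fst e1) + Rabs (snd e1) + Rabs (fst e2) + Rabs (snd e2)) / Rabs D)
      by (apply Rle_mult_inv_pos; lra). lra. }
  exists (Rmin ea eb / K). split.
  { apply Rdiv_lt_0_compat; auto. apply Rmin_glb_lt; auto. }
  intros u [m [n Hu]] Hd.
  set (del := Cdist u p) in *.
  assert (Hd1 : Rabs (fst u - fst p) <= del).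
  { replace (fst u - fst p) with (fst (Cadd u (Copp p))) by (unfold Cadd, Copp; simpl; ring). apply fst_le_norm. }
  assert (Hd2 : Rabs (snd u - snd p) <= del).
  { replace (snd u - snd p) with (snd (Cadd u (Copp p))) by (unfold Cadd, Copp; simpl; ring). apply snd_le_norm. }
  assert (Hdel0 : 0 <= del) by (pose proof (Rabs_pos (fst u - fst p)); lra).
  assert (HdK : del * K < Rmin ea eb).
  { apply (Rmult_lt_compat_r K) in Hd; auto. unfold Rdiv in Hd.
    rewrite Rmult_assoc, Rinv_l, Rmult_1_r in Hd; lra. }
  pose proof (Rmin_l ea eb). pose proof (Rmin_r ea eb).
  assert (Hsum : forall c1 c2, Rabs c1 + Rabs c2 <= Rabs (fst e1) + Rabs (snd e1) + Rabs (fst e2) + Rabs (snd e2) ->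
     Rabs ((fst u - fst p) * c1 - (snd u - snd p) * c2) / Rabs D <= del * K).
  { intros c1 c2 Hc. pose proof (lin_bound _ _ c1 c2 del Hd1 Hd2).
    unfold K. rewrite Rmult_plus_distr_l, Rmult_1_r.
    apply Rle_trans with (del * ((Rabs (fst e1) + Rabs (snd e1) + Rabs (fst e2) + Rabs (snd e2)) / Rabs D)); [|lra].
    unfold Rdiv. rewrite <- Rmult_assoc. apply Rmult_le_compat_r.
    - left; apply Rinv_0_lt_compat; auto.
    - eapply Rle_trans; [exact H1|]. apply Rmult_le_compat_l; auto. }
  assert (Eu1 : fst u = fst v + IZR m * fst e1 + IZR n * fst e2) by (rewrite Hu; simpl; ring).
  assert (Eu2 : snd u = snd v + IZR m * snd e1 + IZR n * snd e2) by (rewrite Hu; simpl; ring).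
  assert (Hm : IZR m = al).
  { apply Ha. replace (IZR m - al) with (((fst u - fst p) * snd e2 - (snd u - snd p) * fst e2) / D).
    - unfold Rdiv. rewrite Rabs_mult, Rabs_inv. fold (Rabs (((fst u - fst p) * snd e2 - (snd u - snd p) * fst e2)) / Rabs D).
      eapply Rle_lt_trans; [apply Hsum|lra].
      pose proof (Rabs_pos (fst e1)). pose proof (Rabs_pos (snd e1)). lra.
    - unfold al. rewrite Eu1, Eu2. unfold D. field. exact HD. }
  assert (Hn : IZR n = be).
  { apply Hb. replace (IZR n - be) with (((snd u - snd p) * fst e1 - (fst u - fst p) * snd e1) / D).
    - unfold Rdiv. rewrite Rabs_mult, Rabs_inv. fold (Rabs (((snd u - snd p) * fst e1 - (fst u - fst p) * snd e1)) / Rabs D).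
      assert (Hsum2 : Rabs ((snd u - snd p) * fst e1 - (fst u - fst p) * snd e1) / Rabs D <= del * K).
      { unfold K. rewrite Rmult_plus_distr_l, Rmult_1_r.
        pose proof (lin_bound _ _ (fst e1) (snd e1) del Hd2 Hd1).
        apply Rle_trans with (del * ((Rabs (fst e1) + Rabs (snd e1) + Rabs (fst e2) + Rabs (snd e2)) / Rabs D)); [|lra].
        unfold Rdiv. rewrite <- Rmult_assoc. apply Rmult_le_compat_r.
        - left; apply Rinv_0_lt_compat; auto.
        - eapply Rle_trans; [exact H1|]. apply Rmult_le_compat_l; auto.
          pose proof (Rabs_pos (fst e2)). pose proof (Rabs_pos (snd e2)). lra. }
      lra.
    - unfold be. rewrite Eu1, Eu2. unfold D. field. exact HD. }
  apply pair_eq.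
  - rewrite Eu1, Hm, Hn. unfold al, be. unfold D in *. field. exact HD.
  - rewrite Eu2, Hm, Hn. unfold al, be. unfold D in *. field. exact HD.
Qed.

Lemma lat_finite (vf : nat -> Cplx) e1 e2 : fst e1 * snd e2 - snd e1 * fst e2 <> 0 ->
  forall N, Psep (fun u => exists j, (j < N)%nat /\ LatP (vf j) e1 e2 u).
Proof.
  intros HD N. induction N.
  - intro p. exists 1. split; [lra|]. intros u [j [Hj _]]. lia.
  - eapply Psep_sub; [apply (Psep_union _ _ IHN (lat_single (vf N) e1 e2 HD))|].
    intros u [j [Hj Hu]]. destruct (Nat.eq_dec j N).
    + subst. right; auto.
    + left. exists j. split; auto. lia.
Qed.

Fixpoint Cpow (x : Cplx) (n : nat) : Cplx :=
  match n with O => C1 | S k => Cmul x (Cpow x k) end.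

Lemma Cmul_assoc x y z : Cmul x (Cmul y z) = Cmul (Cmul x y) z.
Proof. apply pair_eq; unfold Cmul; simpl; ring. Qed.
Lemma Cmul_1_l x : Cmul C1 x = x.
Proof. apply pair_eq; unfold Cmul, C1; simpl; ring. Qed.

Lemma Cpow_add x j k : Cpow x (j + k) = Cmul (Cpow x j) (Cpow x k).
Proof.
  induction j; simpl.
  - rewrite Cmul_1_l; auto.
  - rewrite IHj, Cmul_assoc; auto.
Qed.

Lemma Cinv_unique x y : Cmul x y = C1 -> Cinv x = y.
Proof.
  destruct x as [x1 x2], y as [y1 y2]. unfold Cmul, C1, Cinv; simpl. intro H.
  injection H as E1 E2.
  set (n := x1 * x1 + x2 * x2).
  assert (Hn : n <> 0).
  { intro Hn0. assert (x1 = 0) by (unfold n in Hn0; nra). assert (x2 = 0) by (unfold n in Hn0; nra).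
    subst. lra. }
  assert (Hy1 : y1 * n = x1 * (x1 * y1 - x2 * y2) + x2 * (x1 * y2 + x2 * y1)) by (unfold n; ring).
  assert (Hy2 : y2 * n = - x2 * (x1 * y1 - x2 * y2) + x1 * (x1 * y2 + x2 * y1)) by (unfold n; ring).
  rewrite E1, E2 in Hy1, Hy2.
  apply pair_eq; simpl.
  - apply (Rmult_eq_reg_r n); auto. field_simplify; auto. lra.
  - apply (Rmult_eq_reg_r n); auto. field_simplify; auto. lra.
Qed.

Section Closed.
Variables (theta : R) (a : Cplx) (N : nat) (e1 e2 : Cplx).
Let GG := G_hf a theta.
Let lam := Cexpi theta.
Definition Lat (x : Cplx) := exists m n : Z, x = Cadd (Cscal (IZR m) e1) (Cscal (IZR n) e2).
Hypothesis HN : (1 <= N)%nat.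
Hypothesis HlamN : Cpow lam N = C1.
Hypothesis Hl1 : Lat (Cmul lam e1).
Hypothesis Hl2 : Lat (Cmul lam e2).
Hypothesis Hb : Lat (snd (rot_f a theta)).
Hypothesis HD : fst e1 * snd e2 - snd e1 * fst e2 <> 0.

Lemma Lat_0 : Lat C0.
Proof. exists 0%Z, 0%Z. apply pair_eq; simpl; ring. Qed.
Lemma Lat_add x y : Lat x -> Lat y -> Lat (Cadd x y).
Proof.
  intros [m [n ->]] [m' [n' ->]]. exists (m + m')%Z, (n + n')%Z.
  rewrite !plus_IZR. apply pair_eq; simpl; ring.
Qed.
Lemma Lat_int k x : Lat x -> Lat (Cscal (IZR k) x).
Proof.
  intros [m [n ->]]. exists (k * m)%Z, (k * n)%Z.
  rewrite !mult_IZR. apply pair_eq; simpl; ring.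
Qed.
Lemma Lat_opp x : Lat x -> Lat (Copp x).
Proof.
  intro H. replace (Copp x) with (Cscal (IZR (-1)) x) by (apply pair_eq; simpl; ring).
  apply Lat_int; auto.
Qed.
Lemma Lat_lam x : Lat x -> Lat (Cmul lam x).
Proof.
  intros [m [n ->]].
  replace (Cmul lam (Cadd (Cscal (IZR m) e1) (Cscal (IZR n) e2))) with
    (Cadd (Cscal (IZR m) (Cmul lam e1)) (Cscal (IZR n) (Cmul lam e2)))
    by (apply pair_eq; unfold Cmul, Cadd, Cscal; simpl; ring).
  apply Lat_add; apply Lat_int; auto.
Qed.
Lemma Lat_pow j x : Lat x -> Lat (Cmul (Cpow lam j) x).
Proof.
  intro H. induction j; simpl.
  - rewrite Cmul_1_l; auto.
  - rewrite <- Cmul_assoc. apply Lat_lam; auto.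
Qed.

Lemma Cpow_N q : Cpow lam (N * q) = C1.
Proof.
  induction q.
  - rewrite Nat.mul_0_r. reflexivity.
  - rewrite Nat.mul_succ_r, Cpow_add, IHq, HlamN. apply pair_eq; unfold Cmul, C1; simpl; ring.
Qed.

Lemma Cpow_mod j : Cpow lam j = Cpow lam (j mod N).
Proof.
  rewrite (Nat.div_mod_eq j N) at 1. rewrite Cpow_add, Cpow_N, Cmul_1_l. auto.
Qed.

Lemma GG_inv g : GG g -> exists j, fst g = Cpow lam j /\ Lat (snd g).
Proof.
  induction 1 as [|g [->| ->]|g Hg [j [Hj Hl]]|g k Hg [j [Hj Hl]] Hk [j' [Hj' Hl']]].
  - exists 0%nat. split; auto. apply Lat_0.
  - exists 1%nat. split. simpl. apply pair_eq; unfold rot_h, Cmul, C1; simpl; ring.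
    simpl. apply Lat_0.
  - exists 1%nat. split. simpl. apply pair_eq; unfold rot_f, Cmul, C1; simpl; ring.
    apply Hb.
  - exists (j * (N - 1))%nat.
    assert (Hi : Cinv (fst g) = Cpow lam (j * (N - 1))).
    { apply Cinv_unique. rewrite Hj, <- Cpow_add.
      replace (j + j * (N - 1))%nat with (N * j)%nat by nia. apply Cpow_N. }
    unfold aff_inv; simpl. split; auto.
    rewrite Hi. apply Lat_opp, Lat_pow; auto.
  - exists (j + j')%nat. unfold aff_comp; simpl. split.
    + rewrite Hj, Hj', Cpow_add. auto.
    + apply Lat_add; auto. rewrite Hj. apply Lat_pow; auto.
Qed.

Lemma closed_main z : Cclosed (Corbit GG z) /\ Cdiscrete (Corbit GG z).
Proof.
  apply Psep_cd. eapply Psep_sub; [apply (lat_finite (fun j => Cmul (Cpow lam j) z) e1 e2 HD N)|].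
  intros u [g [Hg ->]]. destruct (GG_inv g Hg) as [j [Hj [m [n Hl]]]].
  exists (j mod N)%nat. split; [apply Nat.mod_upper_bound; lia|].
  exists m, n. unfold aff_apply. rewrite Hj, Hl, Cpow_mod. reflexivity.
Qed.
End Closed.

Lemma lam2 t x : Cmul (Cexpi t) (Cmul (Cexpi t) x) =
  Cadd (Cscal (-1) x) (Cscal (2 * cos t) (Cmul (Cexpi t) x)).
Proof.
  pose proof (sin2_cos2 t) as H. unfold Rsqr in H.
  unfold Cexpi, Cmul, Cadd, Cscal; apply pair_eq; simpl.
  - assert (E : (cos t * (cos t * fst x - sin t * snd x) - sin t * (cos t * snd x + sin t * fst x))
      - (-1 * fst x + 2 * cos t * (cos t * fst x - sin t * snd x)) = fst x * (1 - (sin t * sin t + cos t * cos t))) by ring.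
    rewrite H in E. lra.
  - assert (E : (cos t * (cos t * snd x + sin t * fst x) + sin t * (cos t * fst x - sin t * snd x))
      - (-1 * snd x + 2 * cos t * (cos t * snd x + sin t * fst x)) = snd x * (1 - (sin t * sin t + cos t * cos t))) by ring.
    rewrite H in E. lra.
Qed.

Lemma Cmul_add_r x y z : Cmul x (Cadd y z) = Cadd (Cmul x y) (Cmul x z).
Proof. apply pair_eq; unfold Cmul, Cadd; simpl; ring. Qed.
Lemma Cmul_scal_r x r y : Cmul x (Cscal r y) = Cscal r (Cmul x y).
Proof. apply pair_eq; unfold Cmul, Cscal; simpl; ring. Qed.

Lemma partA theta a (htheta : forall k : Z, theta <> 2 * PI * IZR k) (ha : a <> C0)
  (n : Z) (Hn : 2 * cos theta = IZR n) :
  forall z, Cclosed (Corbit (G_hf a theta) z) /\ Cdiscrete (Corbit (G_hf a theta) z).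
Proof.
  intro z.
  pose proof (sin2_cos2 theta) as Hcs. unfold Rsqr in Hcs.
  pose proof (COS_bound theta) as [B1 B2].
  assert (Hc1 : cos theta <> 1).
  { intro E. assert (cos theta = cos 0) by (rewrite cos_0; auto).
    destruct (cos_eq_cos _ _ H) as [k [E'|E']]; apply (htheta k); lra. }
  assert (Hn1 : (-2 <= n <= 2)%Z) by (split; apply le_IZR; simpl; lra).
  assert (Hn2 : n <> 2%Z) by (intro; subst; simpl in Hn; lra).
  set (b := snd (rot_f a theta)).
  assert (Hb : 0 < n2 b).
  { unfold b, rot_f; simpl. rewrite n2_mul.
    assert (0 < n2 a) by (apply n2_pos; auto).
    unfold n2, Cexpi, Cadd, Copp, C1; simpl. unfold n2 in H.
    assert (0 < (1 - cos theta) * (1 - cos theta)) by (apply Rsqr_pos_lt; lra).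
    apply Rmult_lt_0_compat; [nra|exact H]. }
  unfold n2 in Hb.
  assert (n = -2 \/ n <> -2)%Z as [Em2|Enm2] by lia.
  - subst n. simpl in Hn.
    assert (Hco : cos theta = -1) by lra.
    assert (Hsi : sin theta = 0) by nra.
    apply (closed_main theta a 2 b (- snd b, fst b)).
    + lia.
    + simpl. unfold Cexpi, Cmul, C1. rewrite Hco, Hsi. apply pair_eq; simpl; ring.
    + exists (-1)%Z, 0%Z. unfold Cexpi, Cmul, Cadd, Cscal. rewrite Hco, Hsi. apply pair_eq; simpl; ring.
    + exists 0%Z, (-1)%Z. unfold Cexpi, Cmul, Cadd, Cscal. rewrite Hco, Hsi. apply pair_eq; simpl; ring.
    + exists 1%Z, 0%Z. fold b. apply pair_eq; simpl; ring.
    + replace (fst b * snd (- snd b, fst b) - snd b * fst (- snd b, fst b)) with (fst b * fst b + snd b * snd b) by (cbn [fst snd]; ring). apply Rgt_not_eq; lra.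
  - assert (Hsi : sin theta <> 0).
    { intro E. rewrite E in Hcs. assert (cos theta = 1 \/ cos theta = -1) as [E1|E1] by nra; auto.
      apply Enm2. apply eq_IZR. simpl. lra. }
    assert (HN : exists N, (1 <= N)%nat /\ Cpow (Cexpi theta) N = C1).
    { assert (n = -1 \/ n = 0 \/ n = 1)%Z as [E|[E|E]] by lia; subst n; simpl in Hn.
      - exists 3%nat. split; [lia|]. simpl. repeat (rewrite ?lam2, ?Cmul_add_r, ?Cmul_scal_r). rewrite Hn.
        unfold Cexpi, Cmul, Cadd, Cscal, C1. apply pair_eq; simpl; ring.
      - exists 4%nat. split; [lia|]. simpl. repeat (rewrite ?lam2, ?Cmul_add_r, ?Cmul_scal_r). rewrite Hn.
        unfold Cexpi, Cmul, Cadd, Cscal, C1. apply pair_eq; simpl; ring.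
      - exists 6%nat. split; [lia|]. simpl. repeat (rewrite ?lam2, ?Cmul_add_r, ?Cmul_scal_r). rewrite Hn.
        unfold Cexpi, Cmul, Cadd, Cscal, C1. apply pair_eq; simpl; ring. }
    destruct HN as [N [HN1 HN2]].
    apply (closed_main theta a N b (Cmul (Cexpi theta) b)); auto.
    + exists 0%Z, 1%Z. apply pair_eq; simpl; ring.
    + exists (-1)%Z, n. rewrite lam2, Hn. apply pair_eq; simpl; ring.
    + exists 1%Z, 0%Z. fold b. apply pair_eq; simpl; ring.
    + unfold Cexpi, Cmul; cbn [fst snd].
      replace (fst b * (cos theta * snd b + sin theta * fst b) - snd b * (cos theta * fst b - sin theta * snd b))
        with (sin theta * (fst b * fst b + snd b * snd b)) by ring.
      apply Rmult_integral_contrapositive; split; auto. lra.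
Qed.

Lemma Cnorm_lt_inv (x : Cplx) e : Cnorm x < e -> n2 x < e * e.
Proof.
  unfold Cnorm, n2. intro H.
  assert (H0 : 0 <= fst x * fst x + snd x * snd x) by nra.
  pose proof (sqrt_sqrt _ H0). pose proof (sqrt_pos (fst x * fst x + snd x * snd x)). nra.
Qed.

Lemma dense_not_discrete A : Cdense A -> Cdiscrete A -> False.
Proof.
  intros Hd Hs. destruct (Hd C0 1 Rlt_0_1) as [u [Au _]].
  destruct (Hs u Au) as [e [He Hu]].
  set (w := Cadd u (e / 2, 0)).
  destruct (Hd w (e / 2) ltac:(lra)) as [u' [Au' Hd']].
  apply Cnorm_lt_inv in Hd'. unfold n2, w, Cadd, Copp in Hd'; simpl in Hd'.
  assert (Hc : Cdist u' u < e).
  { apply Cnorm_lt; auto. unfold n2, Cadd, Copp; simpl.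
    set (d1 := fst u' + - (fst u + e / 2)) in *. set (d2 := snd u' + - (snd u + 0)) in *.
    assert (Hd1 : d1 < e / 2) by nra.
    replace (fst u' + - fst u) with (d1 + e / 2) by (unfold d1; ring).
    replace (snd u' + - snd u) with d2 by (unfold d2; ring). nra. }
  specialize (Hu u' Au' Hc). subst u'. nra.
Qed.

Theorem theorem3p1 (theta : R) (a : Cplx)
  (htheta : forall k : Z, theta <> 2 * PI * IZR k)
  (ha : a <> C0) :
  let G := G_hf a theta in
  let all_dense := forall z, Cdense (Corbit G z) in
  let all_cd := forall z, Cclosed (Corbit G z) /\ Cdiscrete (Corbit G z) in
  ((all_dense /\ ~ all_cd) \/ (all_cd /\ ~ all_dense)) /\
  (all_dense <-> ~ (H2 theta \/ H3 theta)) /\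
  (all_cd <-> (H2 theta \/ H3 theta)) /\
  ((H2 theta \/ H3 theta) <-> SR1 (rot_f a theta)).
Proof.
  cbv zeta.
  assert (PA : H2 theta \/ H3 theta -> forall z, Cclosed (Corbit (G_hf a theta) z) /\ Cdiscrete (Corbit (G_hf a theta) z)).
  { intro HQ. destruct (K1_fwd _ HQ) as [n Hn]. apply (partA theta a htheta ha n Hn). }
  assert (PB : ~ (H2 theta \/ H3 theta) -> forall z, Cdense (Corbit (G_hf a theta) z)).
  { intro HQ. apply dense_main; auto. intros n Hn. apply HQ. apply (K1_bwd theta htheta n). auto. }
  assert (EX : (forall z, Cdense (Corbit (G_hf a theta) z)) ->
     (forall z, Cclosed (Corbit (G_hf a theta) z) /\ Cdiscrete (Corbit (G_hf a theta) z)) -> False).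
  { intros D C. apply (dense_not_discrete (Corbit (G_hf a theta) C0)); auto. apply C. }
  split; [|split; [|split]].
  - destruct (classic (H2 theta \/ H3 theta)) as [HQ|HQ].
    + right. split; [apply PA; exact HQ | intro D; exact (EX D (PA HQ))].
    + left. split; [apply PB; exact HQ | intro C; exact (EX (PB HQ) C)].
  - split; [intros D HQ; exact (EX D (PA HQ)) | exact PB].
  - split; [|exact PA]. intro C. destruct (classic (H2 theta \/ H3 theta)) as [HQ|HQ]; [exact HQ|].
    exfalso. exact (EX (PB HQ) C).
  - unfold SR1, F2, F3, rot_f. simpl. split.
    + intros [H|H]; [left|right]; exists theta; auto.
    + intros [[x [Hx E]]|[x [Hx E]]];
      (assert (Ec : cos theta = cos x) by (apply (f_equal fst) in E; exact E));
      [destruct (K1_fwd x (or_introl Hx)) as [n Hn] | destruct (K1_fwd x (or_intror Hx)) as [n Hn]];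
      apply (K1_bwd theta htheta n); congruence.
Qed.
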